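(* There exists a family $\{\pi_s(x)\}_{s\in2^{<\omega}}$ of consistent partial types over $\emptyset$ in one variable in the theory $APr_A$ such that (i) for all $s\in2^{<\omega}$, $d(\pi_{s^\frown0},\pi_{s^\frown1})\ge\frac13$, meaning that $d(a_0,a_1)\ge\frac13$ whenever $a_i\models\pi_{s^\frown i}$ for $i=0,1$; and (ii) if $s,t\in2^{<\omega}$ and $t$ extends $s$ then $\pi_t\vdash\pi_s$.
   Context: Probability algebras are continuous structures in the language $\{0,1,\cdot^c,\cup,\cap\}$ with metric $d(a,b)=\mu(a\triangle b)$; $APr_A$ is the theory of pairs (atomless probability algebra, aperiodic automorphism $\tau$), where $\tau$ is aperiodic if for every nonzero $a$ and $n>0$ some $b\le a$ has $\tau^n(b)\ne b$. $2^{<\omega}$ is the set of finite binary sequences and $s^\frown i$ denotes appending $i$. *)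

(* Defs.v *)
From HB Require Import structures.
From mathcomp Require Import all_boot all_order all_algebra.
From mathcomp Require Import boolp classical_sets reals.
From mathcomp Require Import Rstruct.
Import Order.TTheory GRing.Theory Num.Theory.

Set Implicit Arguments.
Unset Strict Implicit.
Unset Printing Implicit Defensive.

Local Open Scope ring_scope.
Local Open Scope classical_set_scope.

Definition Rr : realType := Rdefinitions.R.

Record PAops := {
  car :> Type;
  bzero : car;
  bone : car;
  bcompl : car -> car;
  bjoin : car -> car -> car;
  bmeet : car -> car -> car;
  mu : car -> Rr;
  tau : car -> car;
  tau_inv : car -> car
}.
Arguments bzero : clear implicits.
Arguments bone : clear implicits.
Arguments mu : clear implicits.
Arguments tau : clear implicits.
Arguments tau_inv : clear implicits.

Definition ble (M : PAops) (a b : M) : Prop := bmeet a b = a.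

Definition pdist (M : PAops) (a b : M) : Rr :=
  mu M (bjoin (bmeet a (bcompl b)) (bmeet (bcompl a) b)).

Record is_APrA_model (M : PAops) : Prop := {
  joinC : forall a b : M, bjoin a b = bjoin b a;
  meetC : forall a b : M, bmeet a b = bmeet b a;
  joinA : forall a b c : M, bjoin a (bjoin b c) = bjoin (bjoin a b) c;
  meetA : forall a b c : M, bmeet a (bmeet b c) = bmeet (bmeet a b) c;
  joinKmeet : forall a b : M, bjoin a (bmeet a b) = a;
  meetKjoin : forall a b : M, bmeet a (bjoin a b) = a;
  join_meetD : forall a b c : M, bjoin a (bmeet b c) = bmeet (bjoin a b) (bjoin a c);
  meet_joinD : forall a b c : M, bmeet a (bjoin b c) = bjoin (bmeet a b) (bmeet a c);
  join_compl : forall a : M, bjoin a (bcompl a) = bone M;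
  meet_compl : forall a : M, bmeet a (bcompl a) = bzero M;
  mu_one : mu M (bone M) = 1;
  mu_ge0 : forall a : M, 0 <= mu M a;
  mu_add : forall a b : M, bmeet a b = bzero M -> mu M (bjoin a b) = mu M a + mu M b;
  mu_pos : forall a : M, mu M a = 0 -> a = bzero M;
  pdist_complete : forall u : nat -> M,
    (forall e : Rr, 0 < e -> exists N, forall m n, (N <= m)%N -> (N <= n)%N ->
        pdist (u m) (u n) < e) ->
    exists a : M, forall e : Rr, 0 < e -> exists N, forall n, (N <= n)%N ->
        pdist (u n) a < e;
  atomless : forall a : M, a <> bzero M ->
    exists b : M, ble b a /\ 0 < mu M b /\ mu M b < mu M a;
  tau_invK : forall a : M, tau_inv M (tau M a) = a;
  tauK : forall a : M, tau M (tau_inv M a) = a;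
  tau_zero : tau M (bzero M) = bzero M;
  tau_one : tau M (bone M) = bone M;
  tau_compl : forall a : M, tau M (bcompl a) = bcompl (tau M a);
  tau_join : forall a b : M, tau M (bjoin a b) = bjoin (tau M a) (tau M b);
  tau_meet : forall a b : M, tau M (bmeet a b) = bmeet (tau M a) (tau M b);
  tau_mu : forall a : M, mu M (tau M a) = mu M a;
  aperiodic : forall a : M, a <> bzero M -> forall n : nat, (0 < n)%N ->
    exists b : M, ble b a /\ iter n (tau M) b <> b
}.

Record APrA_model := {
  mops :> PAops;
  maxioms : is_APrA_model mops
}.

(* Continuous-logic syntax (full system of connectives 1, 1-x, x/2,   *)
(* x -. y, and quantifiers sup / inf), no parameters                  *)

Inductive term :=
| TVar of nat
| TZero
| TOne
| TCompl of term
| TJoin of term & term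
| TMeet of term & term
| TTau of term
| TTauInv of term.

Inductive formula :=
| FDist of term & term
| FOne
| FNeg of formula
| FHalf of formula
| FMinus of formula & formula
| FSup of nat & formula
| FInf of nat & formula.

Fixpoint tfv_sub (S : nat -> bool) (t : term) : Prop :=
  match t with
  | TVar n => S n
  | TZero | TOne => True
  | TCompl t | TTau t | TTauInv t => tfv_sub S t
  | TJoin t u | TMeet t u => tfv_sub S t /\ tfv_sub S u
  end.

Fixpoint fv_sub (S : nat -> bool) (phi : formula) : Prop :=
  match phi with
  | FDist t u => tfv_sub S t /\ tfv_sub S u
  | FOne => True
  | FNeg p | FHalf p => fv_sub S p
  | FMinus p q => fv_sub S p /\ fv_sub S q
  | FSup n p | FInf n p => fv_sub (fun k => (k == n) || S k) p
  end.

Definition upd (M : PAops) (e : nat -> M) (n : nat) (a : M) : nat -> M :=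
  fun k => if k == n then a else e k.

Fixpoint teval (M : PAops) (e : nat -> M) (t : term) : M :=
  match t with
  | TVar n => e n
  | TZero => bzero M
  | TOne => bone M
  | TCompl t => bcompl (teval e t)
  | TJoin t u => bjoin (teval e t) (teval e u)
  | TMeet t u => bmeet (teval e t) (teval e u)
  | TTau t => tau M (teval e t)
  | TTauInv t => tau_inv M (teval e t)
  end.

Fixpoint feval (M : PAops) (e : nat -> M) (phi : formula) : Rr :=
  match phi with
  | FDist t u => pdist (teval e t) (teval e u)
  | FOne => 1
  | FNeg p => 1 - feval e p
  | FHalf p => feval e p / 2
  | FMinus p q => Num.max (feval e p - feval e q) 0
  | FSup n p => sup [set feval (upd e n a) p | a in [set: car M]]
  | FInf n p => inf [set feval (upd e n a) p | a in [set: car M]]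
  end.

(* A partial type is a set of conditions "phi(x) = 0".                *)

Definition ptype := formula -> Prop.

Definition one_var_ptype (p : ptype) : Prop :=
  forall phi, p phi -> fv_sub (pred1 0%N) phi.

Definition realizes (M : APrA_model) (a : M) (p : ptype) : Prop :=
  forall phi, p phi -> feval (fun _ => a) phi = 0.

Definition consistent (p : ptype) : Prop :=
  exists (M : APrA_model) (a : M), realizes a p.

Definition entails (p1 p2 : ptype) : Prop :=
  forall (M : APrA_model) (a : M), realizes a p1 -> realizes a p2.

Definition ptype_dist_ge (p0 p1 : ptype) (r : Rr) : Prop :=
  forall (M : APrA_model) (a0 a1 : M),
    realizes a0 p0 -> realizes a1 p1 -> r <= pdist a0 a1.

(* Main.v *)
From HB Require Import structures.
Require Import Defs.
From mathcomp Require Import all_boot all_order all_algebra.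
From mathcomp Require Import boolp classical_sets functions reals ereal topology normedtype sequences measure lebesgue_measure measurable_realfun trigo pi_irrational.
From mathcomp Require Import Rstruct ring lra zify.
From Stdlib Require Import Classical ClassicalEpsilon.
Import Order.TTheory GRing.Theory Num.Theory.
Local Open Scope ring_scope.

Section Abstract.
Variable M : PAops.
Hypothesis H : is_APrA_model M.

Local Notation "a ∧ b" := (bmeet a b) (at level 40, left associativity).
Local Notation "a ∨ b" := (bjoin a b) (at level 50, left associativity).
Local Notation "a '" := (bcompl a) (at level 2, format "a '").
Let mA := Defs.meetA H.
Let mC := Defs.meetC H.
Let jC := Defs.joinC H.
Let jKm := Defs.joinKmeet H.
Let mKj := Defs.meetKjoin H.
Let mjD := Defs.meet_joinD H.

Lemma meet1 (a : M) : a ∧ bone M = a.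
Proof. by rewrite -(join_compl H a) mKj. Qed.

Lemma meetxx (a : M) : a ∧ a = a.
Proof. by rewrite -{2}(jKm a a) mKj. Qed.

Lemma meet0 (a : M) : a ∧ bzero M = bzero M.
Proof. by rewrite -(meet_compl H a) mA meetxx. Qed.

Lemma join0 (a : M) : a ∨ bzero M = a.
Proof. by rewrite -(meet_compl H a) jKm. Qed.

Lemma complK (a : M) : a ' ' = a.
Proof.
have h2 := meet1 (a ' ').
rewrite -(join_compl H a) mjD [a ' ' ∧ a ']mC (meet_compl H) join0 in h2.
have h3 := meet1 a.
rewrite -(join_compl H (a ')) mjD (meet_compl H) jC join0 in h3.
by rewrite -[LHS]h2 mC h3.
Qed.

Lemma complmeet (a : M) : a ' ∧ a = bzero M.
Proof. by rewrite mC meet_compl. Qed.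

Lemma mu0 : mu M (bzero M) = 0.
Proof.
have := mu_add H (meetxx (bzero M)).
have -> : bzero M ∨ bzero M = bzero M.
  by rewrite -{2}(meetxx (bzero M)) jKm.
move=> h; lra.
Qed.

Lemma mu_split (c y : M) : mu M c = mu M (c ∧ y) + mu M (c ∧ y ').
Proof.
rewrite -(mu_add H); last first.
  by rewrite -mA [y ∧ _]mC -!mA complmeet meet0 meet0.
by rewrite -mjD join_compl // meet1.
Qed.

Lemma mu_meet_le (a b : M) : mu M (a ∧ b) <= mu M a.
Proof. rewrite [X in _ <= X](mu_split a b); have := mu_ge0 H (a ∧ b '); lra. Qed.

Lemma pdistE (x z : M) : pdist x z = mu M (x ∧ z ') + mu M (x ' ∧ z).
Proof.
rewrite /pdist (mu_add H) //.
rewrite [x ' ∧ z]mC -!mA [z ' ∧ (z ∧ _)]mA complmeet.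
by rewrite [bzero M ∧ _]mC meet0 meet0.
Qed.

Lemma half_tri (x y z : M) : mu M (x ∧ z) <= mu M (x ∧ y ') + mu M (y ∧ z).
Proof.
rewrite (mu_split (x ∧ z) y).
have e1 : x ∧ z ∧ y = y ∧ z ∧ x.
  by rewrite -mA [z ∧ y]mC mA [x ∧ y]mC -mA [x ∧ z]mC.
have e2 : x ∧ z ∧ y ' = x ∧ y ' ∧ z.
  by rewrite -!mA [z ∧ _]mC.
rewrite e1 e2; have := mu_meet_le (y ∧ z) x; have := mu_meet_le (x ∧ y ') z; lra.
Qed.

Lemma pdist_tri (x y z : M) : pdist x z <= pdist x y + pdist y z.
Proof.
rewrite !pdistE; have := half_tri x y (z '); have := half_tri (x ') (y ') z.
rewrite complK.
lra.
Qed.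

Lemma pdistC (x y : M) : pdist x y = pdist y x.
Proof. by rewrite !pdistE addrC [y ∧ _]mC [y ' ∧ _]mC. Qed.

Lemma pdist_tau (x y : M) : pdist (tau M x) (tau M y) = pdist x y.
Proof. by rewrite /pdist -!(tau_compl H) -!(tau_meet H) -(tau_join H) (tau_mu H). Qed.

Lemma pdist_iter n (x y : M) : pdist (iter n (tau M) x) (iter n (tau M) y) = pdist x y.
Proof. by elim: n => //= n IH; rewrite pdist_tau. Qed.

Lemma sep_bound (a0 a1 : M) m :
  pdist a0 (iter m (tau M) a0) <= 8^-1 ->
  7 / 8 <= pdist a1 (iter m (tau M) a1) ->
  3^-1 <= pdist a0 a1.
Proof.
move=> h0 h1.
have t1 := pdist_tri a1 a0 (iter m (tau M) a1).
have t2 := pdist_tri a0 (iter m (tau M) a0) (iter m (tau M) a1).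
rewrite pdist_iter in t2; rewrite (pdistC a1 a0) in t1.
lra.
Qed.

End Abstract.

Fixpoint tpow (m : nat) : term := if m is m'.+1 then TTau (tpow m') else TVar 0.

Definition c8 : formula := FHalf (FHalf (FHalf FOne)).

Definition cond (k : nat) (b : bool) : formula :=
  if b then FMinus (FNeg c8) (FDist (TVar 0) (tpow (16 ^ k)))
  else FMinus (FDist (TVar 0) (tpow (16 ^ k))) c8.

Definition pis (s : seq bool) : ptype :=
  fun phi => exists2 k, (k < size s)%N & phi = cond k (nth false s k).

Lemma teval_tpow (M : PAops) (a : M) m : teval (fun _ => a) (tpow m) = iter m (tau M) a.
Proof. by elim: m => //= m ->. Qed.

Lemma tfv_tpow m : tfv_sub (pred1 0%N) (tpow m).
Proof. by elim: m. Qed.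

Lemma max0_eq0 (x : Rr) : Num.max x 0 = 0 <-> x <= 0.
Proof.
split; first by move=> h; have := le_max x x 0; rewrite lexx h /= => ->.
by move=> h; apply/max_idPr.
Qed.

Lemma feval_cond (M : PAops) (a : M) k b :
  feval (fun _ => a) (cond k b) = 0 <->
  (if b then 7/8 <= pdist a (iter (16 ^ k) (tau M) a)
   else pdist a (iter (16 ^ k) (tau M) a) <= 8^-1).
Proof.
rewrite /cond; case: b => /=; rewrite teval_tpow max0_eq0;
set d := pdist _ _; split => h; lra.
Qed.


Set Implicit Arguments.
Unset Strict Implicit.
Unset Printing Implicit Defensive.
Local Open Scope classical_set_scope.

Notation lam := (@lebesgue_measure Rr).

Definition I01 : set Rr := `[0, 1[%classic.
Definition symd (A B : set Rr) := (A `\` B) `|` (B `\` A).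
Definition msub (A : set Rr) := measurable A /\ A `<=` I01.

Lemma msub0 : msub set0.
Proof. by split. Qed.

Lemma msubI01 : msub I01.
Proof. by split => //; exact: measurable_itv. Qed.

Lemma msubU A B : msub A -> msub B -> msub (A `|` B).
Proof. by move=> [mA sA] [mB sB]; split; [exact: measurableU | move=> x [/sA|/sB]]. Qed.

Lemma msubI A B : msub A -> msub B -> msub (A `&` B).
Proof. by move=> [mA sA] [mB sB]; split; [exact: measurableI | move=> x [/sA]]. Qed.

Lemma msubC A : msub A -> msub (I01 `\` A).
Proof.
move=> [mA sA]; split; last by move=> x [].
by apply: measurableD => //; exact: measurable_itv.
Qed.

Lemma msubD A B : msub A -> msub B -> msub (A `\` B).
Proof. by move=> [mA sA] [mB sB]; split; [exact: measurableD | move=> x [/sA]]. Qed.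

Lemma msub_symd A B : msub A -> msub B -> msub (symd A B).
Proof. by move=> hA hB; apply: msubU; apply: msubD. Qed.

Lemma lam_ge0 A : (0 <= lam A)%E.
Proof. exact: measure_ge0. Qed.

Lemma lam_le (A B : set Rr) : measurable A -> measurable B -> A `<=` B -> (lam A <= lam B)%E.
Proof. by move=> mA mB AB; apply: le_measure => //; rewrite inE. Qed.

Lemma lam_null_sub (A B : set Rr) : measurable A -> measurable B -> A `<=` B ->
  lam B = 0%E -> lam A = 0%E.
Proof.
move=> mA mB AB B0; apply/eqP; rewrite eq_le lam_ge0 andbT -B0.
exact: lam_le.
Qed.



Lemma lam_nullU (A B : set Rr) : measurable A -> measurable B ->
  lam A = 0%E -> lam B = 0%E -> lam (A `|` B) = 0%E.
Proof.
move=> mA mB A0 B0; apply/eqP; rewrite eq_le lam_ge0 andbT.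
have h : (lam (A `|` B) <= lam A + lam B)%E := measureU2 lam mA mB.
by rewrite A0 B0 adde0 in h.
Qed.

Lemma symdC A B : symd A B = symd B A.
Proof. by rewrite /symd setUC. Qed.

Lemma symd_trans A B C : symd A C `<=` symd A B `|` symd B C.
Proof.
move=> x [[xA xC]|[xC xA]]; have [xB|xB] := pselect (B x).
- by right; left.
- by left; left.
- by left; right.
- by right; right.
Qed.

Lemma symd_self A : symd A A = set0.
Proof. by apply/seteqP; split => x // [[]|[]]. Qed.

Definition eqv (A B : set Rr) := lam (symd A B) = 0%E.

Lemma eqv_refl A : eqv A A.
Proof. by rewrite /eqv symd_self measure0. Qed.

Lemma eqv_sym A B : eqv A B -> eqv B A.
Proof. by rewrite /eqv symdC. Qed.

Lemma eqv_trans A B C : msub A -> msub B -> msub C -> eqv A B -> eqv B C -> eqv A C.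
Proof.
move=> hA hB hC h1 h2; apply: (lam_null_sub _ _ (@symd_trans A B C)).
- by case: (msub_symd hA hC).
- by apply: measurableU; [case: (msub_symd hA hB)| case: (msub_symd hB hC)].
- by apply: lam_nullU => //; [case: (msub_symd hA hB)| case: (msub_symd hB hC)].
Qed.

Lemma eqv_lam A B : msub A -> msub B -> eqv A B -> lam A = lam B.
Proof.
move=> [mA sA] [mB sB] h.
have hAB : lam (A `\` B) = 0%E.
  apply: (lam_null_sub _ _ _ h); [exact: measurableD|exact: (msub_symd (conj mA sA) (conj mB sB)).1|by move=> x hx; left].
have hBA : lam (B `\` A) = 0%E.
  apply: (lam_null_sub _ _ _ h); [exact: measurableD|exact: (msub_symd (conj mA sA) (conj mB sB)).1|by move=> x hx; right].
have e1 : lam A = (lam (A `\` B) + lam (A `&` B))%E := measureDI lam mA mB.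
have e2 : lam B = (lam (B `\` A) + lam (B `&` A))%E := measureDI lam mB mA.
by rewrite e1 e2 hAB hBA !add0e setIC.
Qed.

Definition canon (A : set Rr) : set Rr :=
  epsilon (inhabits set0) (fun B => msub B /\ eqv A B).

Lemma canon_spec A : msub A -> msub (canon A) /\ eqv A (canon A).
Proof. by move=> hA; apply: (epsilon_spec (inhabits set0) (fun B => msub B /\ eqv A B)); exists A; split => //; exact: eqv_refl. Qed.

Lemma canon_eq A B : msub A -> msub B -> eqv A B -> canon A = canon B.
Proof.
move=> hA hB hAB; rewrite /canon; congr epsilon.
apply: funext => C; apply: propext; split => -[hC h]; split => //.
- exact: (eqv_trans hB hA hC (eqv_sym hAB) h).
- exact: (eqv_trans hA hB hC hAB h).
Qed.

Definition QT := {A : set Rr | exists B, msub B /\ A = canon B}.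

Definition norm (A : set Rr) : set Rr := if pselect (msub A) is left _ then A else set0.

Lemma norm_msub A : msub (norm A).
Proof. by rewrite /norm; case: pselect => // _; exact: msub0. Qed.

Lemma normE A : msub A -> norm A = A.
Proof. by rewrite /norm; case: pselect. Qed.

Definition mk (A : set Rr) : QT :=
  exist _ (canon (norm A)) (ex_intro _ (norm A) (conj (norm_msub A) erefl)).

Lemma val_msub (p : QT) : msub (proj1_sig p).
Proof. by case: p => /= A [B [hB ->]]; case: (canon_spec hB). Qed.

Lemma QT_eq (p q : QT) : proj1_sig p = proj1_sig q -> p = q.
Proof. by move=> h; apply: eq_sig_hprop => // x; apply: Prop_irrelevance. Qed.

Lemma mk_val (p : QT) : mk (proj1_sig p) = p.
Proof.
apply: QT_eq; case: p => /= A [B [hB ->]].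
have [hc hBc] := canon_spec hB.
rewrite normE //; exact: (canon_eq hc hB (eqv_sym hBc)).
Qed.

Lemma mk_eq A B : msub A -> msub B -> eqv A B -> mk A = mk B.
Proof. by move=> hA hB h; apply: QT_eq; rewrite /= !normE //; exact: canon_eq. Qed.

Lemma val_mk A : msub A -> eqv (proj1_sig (mk A)) A.
Proof. by move=> hA; rewrite /= normE //; apply: eqv_sym; case: (canon_spec hA). Qed.

Lemma mk_inj A B : msub A -> msub B -> mk A = mk B -> eqv A B.
Proof.
move=> hA hB h.
have h1 := val_mk hA; have h2 := val_mk hB.
rewrite h in h1.
exact: (eqv_trans hA (val_msub (mk B)) hB (eqv_sym h1) h2).
Qed.

Lemma mk_congr A B P Q : msub A -> msub B -> msub P -> msub Q ->
  symd A B `<=` symd P Q -> eqv P Q -> mk A = mk B.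
Proof.
move=> hA hB hP hQ sub h; apply: mk_eq => //.
apply: (lam_null_sub _ _ sub h); [exact: (msub_symd hA hB).1 | exact: (msub_symd hP hQ).1].
Qed.

Lemma lam_val_mk A : msub A -> lam (proj1_sig (mk A)) = lam A.
Proof. by move=> hA; apply: eqv_lam => //; [exact: val_msub|exact: val_mk]. Qed.

Ltac addcl x :=
  repeat match goal with
  | |- context [?S x] => lazymatch goal with _ : S x \/ ~ S x |- _ => fail | _ => have := classic (S x); intro end
  | H : context [?S x] |- _ => lazymatch goal with _ : S x \/ ~ S x |- _ => fail | _ => have := classic (S x); intro end
  end.

Ltac ssolve0 x := unfold symd, setU, setI, setD, setC, subset in *; simpl in *; addcl x; tauto.
Ltac ssolve := let x := fresh "x" in move=> x; ssolve0 x.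

Ltac msolve := repeat first [ assumption | apply: val_msub | apply: msub0 | apply: msubI01
  | apply: msubC | apply: msubD | apply: msubU | apply: msubI ].

Notation val := (@proj1_sig _ _).

Lemma mkU_r X Y : msub X -> msub Y -> mk (X `|` val (mk Y)) = mk (X `|` Y).
Proof.
move=> hX hY; have hV := val_msub (mk Y).
apply: (mk_congr (msubU hX hV) (msubU hX hY) hV hY _ (val_mk hY)).
set V := val _; clearbody V; ssolve.
Qed.

Lemma mkU_l X Y : msub X -> msub Y -> mk (val (mk Y) `|` X) = mk (Y `|` X).
Proof. by move=> hX hY; rewrite setUC mkU_r // setUC. Qed.

Lemma mkI_r X Y : msub X -> msub Y -> mk (X `&` val (mk Y)) = mk (X `&` Y).
Proof.
move=> hX hY; have hV := val_msub (mk Y).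
apply: (mk_congr (msubI hX hV) (msubI hX hY) hV hY _ (val_mk hY)).
set V := val _; clearbody V; ssolve.
Qed.

Lemma mkI_l X Y : msub X -> msub Y -> mk (val (mk Y) `&` X) = mk (Y `&` X).
Proof. by move=> hX hY; rewrite setIC mkI_r // setIC. Qed.

Lemma mkC X : msub X -> mk (I01 `\` val (mk X)) = mk (I01 `\` X).
Proof.
move=> hX; have hV := val_msub (mk X).
apply: (mk_congr (msubC hV) (msubC hX) hV hX _ (val_mk hX)).
set V := val _; clearbody V; ssolve.
Qed.

Definition qjoin (p q : QT) := mk (val p `|` val q).
Definition qmeet (p q : QT) := mk (val p `&` val q).
Definition qcompl (p : QT) := mk (I01 `\` val p).
Definition qzero := mk set0.
Definition qone := mk I01.
Definition qmu (p : QT) : Rr := fine (lam (val p)).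

Lemma q_joinC p q : qjoin p q = qjoin q p.
Proof. by rewrite /qjoin setUC. Qed.
Lemma q_meetC p q : qmeet p q = qmeet q p.
Proof. by rewrite /qmeet setIC. Qed.
Lemma q_joinA a b c : qjoin a (qjoin b c) = qjoin (qjoin a b) c.
Proof.
have ha := val_msub a; have hb := val_msub b; have hc := val_msub c.
rewrite /qjoin mkU_r ?mkU_l ?setUA //; by msolve.
Qed.
Lemma q_meetA a b c : qmeet a (qmeet b c) = qmeet (qmeet a b) c.
Proof.
have ha := val_msub a; have hb := val_msub b; have hc := val_msub c.
rewrite /qmeet mkI_r ?mkI_l ?setIA //; by msolve.
Qed.
Lemma q_joinKmeet a b : qjoin a (qmeet a b) = a.
Proof.
have ha := val_msub a; have hb := val_msub b.
rewrite /qjoin /qmeet mkU_r //; try by msolve.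
rewrite -[RHS](mk_val a); congr mk; apply/seteqP; split; ssolve.
Qed.
Lemma q_meetKjoin a b : qmeet a (qjoin a b) = a.
Proof.
have ha := val_msub a; have hb := val_msub b.
rewrite /qjoin /qmeet mkI_r //; try by msolve.
rewrite -[RHS](mk_val a); congr mk; apply/seteqP; split; ssolve.
Qed.
Lemma q_join_meetD a b c : qjoin a (qmeet b c) = qmeet (qjoin a b) (qjoin a c).
Proof.
have ha := val_msub a; have hb := val_msub b; have hc := val_msub c.
rewrite /qjoin /qmeet mkU_r ?mkI_l ?mkI_r //; try by msolve.
congr mk; apply/seteqP; split; ssolve.
Qed.
Lemma q_meet_joinD a b c : qmeet a (qjoin b c) = qjoin (qmeet a b) (qmeet a c).
Proof.
have ha := val_msub a; have hb := val_msub b; have hc := val_msub c.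
rewrite /qjoin /qmeet mkI_r ?mkU_l ?mkU_r //; try by msolve.
congr mk; apply/seteqP; split; ssolve.
Qed.
Lemma q_join_compl a : qjoin a (qcompl a) = qone.
Proof.
have [ma sa] := val_msub a.
rewrite /qjoin /qcompl /qone mkU_r //; try by msolve.
congr mk; apply/seteqP; split => x; have := sa x; ssolve0 x.
Qed.
Lemma q_meet_compl a : qmeet a (qcompl a) = qzero.
Proof.
have [ma sa] := val_msub a.
rewrite /qmeet /qcompl /qzero mkI_r //; try by msolve.
congr mk; apply/seteqP; split => x; have := sa x; ssolve0 x.
Qed.

Lemma lam_I01 : lam I01 = 1%E.
Proof. by rewrite /I01 lebesgue_measure_itv /= lte01 EFinN sube0. Qed.

Lemma lam_fin A : msub A -> lam A \is a fin_num.
Proof.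
move=> [mA sA]; rewrite ge0_fin_numE ?lam_ge0 //.
apply: (le_lt_trans (lam_le mA _ sA)); first exact: measurable_itv.
by rewrite lam_I01 ltry.
Qed.

Lemma q_mu_one : qmu qone = 1.
Proof. by rewrite /qmu /qone lam_val_mk ?lam_I01 //; exact: msubI01. Qed.

Lemma q_mu_ge0 a : 0 <= qmu a.
Proof. exact/fine_ge0/lam_ge0. Qed.

Lemma eqv0 A : msub A -> eqv A set0 -> lam A = 0%E.
Proof. by move=> hA; rewrite /eqv (_ : symd A set0 = A) //; apply/seteqP; split; ssolve. Qed.

Lemma q_mu_add a b : qmeet a b = qzero -> qmu (qjoin a b) = qmu a + qmu b.
Proof.
have [ma sa] := val_msub a; have [mb sb] := val_msub b.
move=> h; have h0 : lam (val a `&` val b) = 0%E.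
  apply: eqv0; first exact: msubI.
  by apply: mk_inj h; [exact: msubI | exact: msub0].
rewrite /qmu /qjoin lam_val_mk; last by msolve.
have e1 : (val a `|` val b) = val a `|` (val b `\` val a).
  by apply/seteqP; split; ssolve.
have e2 : lam (val a `|` (val b `\` val a)) = (lam (val a) + lam (val b `\` val a))%E.
  apply: (measureU lam ma (measurableD mb ma)).
  by apply/seteqP; split; ssolve.
have e3 : lam (val b) = (lam (val b `\` val a) + lam (val b `&` val a))%E := measureDI lam mb ma.
rewrite setIC h0 adde0 in e3.
rewrite e1 e2 -e3 fineD //; exact: lam_fin.
Qed.

Lemma q_mu_pos a : qmu a = 0 -> a = qzero.
Proof.
have ha := val_msub a.
move=> h; have h0 : lam (val a) = 0%E by rewrite -[LHS](fineK (lam_fin ha)); rewrite /qmu in h; rewrite h.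
rewrite -(mk_val a) /qzero; apply: mk_eq => //; first exact: msub0.
by rewrite /eqv (_ : symd _ set0 = val a) //; apply/seteqP; split; ssolve.
Qed.

Lemma shift_meas (c : Rr) : measurable_fun [set: Rr] (fun y : Rr => y + c).
Proof. by apply: measurable_funD => //; exact: measurable_cst. Qed.

Definition shiftf (c : Rr) : measurableTypeR Rr -> measurableTypeR Rr := fun y => y + c.

Section PShift.
Variable c : Rr.
Definition pshift := pushforward lam (shiftf c).
Let mf : measurable_fun [set: measurableTypeR Rr] (shiftf c) := shift_meas c.
Let pshift0 : pshift set0 = 0%E.
Proof. by rewrite /pshift /pushforward preimage_set0 measure0. Qed.
Let pshift_ge0 A : (0 <= pshift A)%E.
Proof. exact: measure_ge0. Qed.
Let pshift_sigma_additive : semi_sigma_additive pshift.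
Proof.
move=> F mF tF mUF; rewrite /pshift /pushforward preimage_bigcup.
apply: measure_semi_sigma_additive.
- by move=> n; rewrite -[X in measurable X]setTI; exact: mf.
- apply/trivIsetP => /= i j _ _ ij; rewrite -preimage_setI.
  by move/trivIsetP : tF => /(_ _ _ _ _ ij) ->//; rewrite preimage_set0.
- by rewrite -preimage_bigcup -[X in measurable X]setTI; exact: mf.
Qed.
HB.instance Definition _ := isMeasure.Build _ _ _
  pshift pshift0 pshift_ge0 pshift_sigma_additive.
End PShift.

Lemma lam_shift (c : Rr) (A : set Rr) : measurable A ->
  lam ((fun y => y + c) @^-1` A) = lam A.
Proof.
move=> mA; apply/esym. have := @lebesgue_measure_unique Rr (pshift c).
move=> h; rewrite h //.
move=> _ [[a b]] _ <-.
rewrite /pshift /pushforward /shiftf /=. cbv beta. simpl fst; simpl snd.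
rewrite -[RHS]/(lam ((fun y : Rr => y + c) @^-1` `]a, b]%classic)).
rewrite (_ : _ @^-1` _ = `]a - c, b - c]%classic); last first.
  by apply/seteqP; split => x /=; rewrite !in_itv /= ?lerBrDr ?ltrBlDr.
rewrite !lebesgue_measure_itv /= !lte_fin ltrBrDr subrK; congr (if _ then _ else _).
by rewrite EFinB; congr (_%:E); ring.
Qed.

Lemma shift_measurable (c : Rr) (A : set Rr) : measurable A ->
  measurable ((fun y => y + c) @^-1` A).
Proof. by move=> mA; rewrite -[X in measurable X]setTI; exact: shift_meas. Qed.

Definition frac (x : Rr) : Rr := x - (Num.floor x)%:~R.

Lemma I01E x : I01 x <-> (0 <= x /\ x < 1).
Proof. by rewrite /I01 /= in_itv /=; split => [/andP[]|[-> ->]]. Qed.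

Lemma frac_I01 x : I01 (frac x).
Proof.
apply/I01E; rewrite /frac; split; first by rewrite subr_ge0 floor_le.
by have := floorD1_gt x; rewrite intrD; lra.
Qed.

Lemma frac_id x : 0 <= x < 1 -> frac x = x.
move=> h; rewrite /frac (@floor_def _ x 0) ?subr0 // add0r.


Qed.

Lemma fracDz x (z : int) : frac (x + z%:~R) = frac x.
Proof. by rewrite /frac floorDrz // intrKfloor intrD; ring. Qed.

Lemma frac_frac x c : frac (frac x + c) = frac (x + c).
Proof.
rewrite /frac [in LHS](_ : x - _ + c = x + c + (- Num.floor x)%:~R); last by rewrite intrN; ring.
by rewrite -/(frac (x + c + (- Num.floor x)%:~R)) fracDz.
Qed.

Definition rot (t : Rr) (A : set Rr) : set Rr := [set y | I01 y /\ A (frac (y - t))].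

Lemma rot_sub t A : rot t A `<=` I01.
Proof. by move=> y []. Qed.

Lemma rotU t A B : rot t (A `|` B) = rot t A `|` rot t B.
Proof. by apply/seteqP; split => y /=; rewrite /rot /setU /=; tauto. Qed.

Lemma rotI t A B : rot t (A `&` B) = rot t A `&` rot t B.
Proof. by apply/seteqP; split => y /=; rewrite /rot /setI /=; tauto. Qed.

Lemma rotD t A B : rot t (A `\` B) = rot t A `\` rot t B.
Proof. by apply/seteqP; split => y /=; rewrite /rot /setD /=; tauto. Qed.

Lemma rotI01 t : rot t I01 = I01.
Proof. by apply/seteqP; split => y /=; rewrite /rot /=; [tauto | split => //; exact: frac_I01]. Qed.

Lemma rotC t A : rot t (I01 `\` A) = I01 `\` rot t A.
Proof. by rewrite rotD rotI01. Qed.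

Lemma rot0 t : rot t set0 = set0.
Proof. by apply/seteqP; split => y /=; rewrite /rot /=; tauto. Qed.

Lemma rot_symd t A B : rot t (symd A B) = symd (rot t A) (rot t B).
Proof. by rewrite /symd rotU !rotD. Qed.

Lemma rot_rot s t A : rot s (rot t A) = rot (t + s) A.
Proof.
apply/seteqP; split => y /=; rewrite /rot /=.
- by move=> [hy [_ h]]; split => //; move: h; rewrite frac_frac; congr A; congr frac; ring.
- move=> [hy h]; split => //; split; first exact: frac_I01.
  by rewrite frac_frac; move: h; congr A; congr frac; ring.
Qed.

Lemma rot_id A : A `<=` I01 -> rot 0 A = A.
Proof.
move=> sA; apply/seteqP; split => y /=; rewrite /rot /= subr0.
- by move=> [/I01E [h1 h2]]; rewrite frac_id ?h1 ?h2.
- by move=> h; have /I01E [h1 h2] := sA _ h; rewrite frac_id ?h1 ?h2 //; split => //; exact: sA.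
Qed.

Lemma rot_int t (z : int) A : rot (t + z%:~R) A = rot t A.
Proof.
apply/seteqP; split => y /=; rewrite /rot /=;
  by rewrite (_ : y - (t + z%:~R) = (y - t) + (- z)%:~R) ?fracDz // intrN; ring.
Qed.

Lemma rot_frac t A : rot t A = rot (frac t) A.
Proof. by rewrite -(rot_int (frac t) (Num.floor t)) /frac subrK. Qed.

Lemma rot_decomp tau A : 0 <= tau < 1 ->
  rot tau A = ((fun y => y + (- tau)) @^-1` (A `&` `[0, 1 - tau[%classic)) `|`
              ((fun y => y + (1 - tau)) @^-1` (A `&` `[1 - tau, 1[%classic)).
Proof.
move=> /andP[t0 t1]; apply/seteqP; split => y /=; rewrite /rot /= ?in_itv /=.
- move=> [/I01E [y0 y1] hA]; have [ty|yt] := leP tau y.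
  + left; rewrite frac_id in hA; last by apply/andP; lra.
    by split => //; apply/andP; lra.
  + right; rewrite -(fracDz _ 1) frac_id in hA; last by apply/andP; lra.
    by split; [move: hA; congr A; ring | apply/andP; lra].
- case=> -[hA /andP [h1 h2]].
  + split; first by apply/I01E; lra.
    by rewrite frac_id; [move: hA; congr A; ring | apply/andP; lra].
  + split; first by apply/I01E; lra.
    by rewrite -(fracDz _ 1) frac_id; [move: hA; congr A; ring | apply/andP; lra].
Qed.

Lemma frac_itv t : 0 <= frac t < 1.
Proof. by have /I01E [-> ->] := frac_I01 t. Qed.

Lemma msub_rot t A : msub A -> msub (rot t A).
Proof.
move=> [mA sA]; split; last exact: rot_sub.
rewrite rot_frac rot_decomp; last exact: frac_itv.
by apply: measurableU; apply: shift_measurable; apply: measurableI => //; exact: measurable_itv.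
Qed.

Lemma lam_rot t A : msub A -> lam (rot t A) = lam A.
Proof.
move=> [mA sA]; rewrite rot_frac rot_decomp; last exact: frac_itv.
have := frac_itv t; set u := frac t => /andP[u0 u1].
set J1 := `[0, 1 - u[%classic; set J2 := `[1 - u, 1[%classic.
have mJ1 : measurable J1 by exact: measurable_itv.
have mJ2 : measurable J2 by exact: measurable_itv.
have m1 : measurable (A `&` J1) by exact: measurableI.
have m2 : measurable (A `&` J2) by exact: measurableI.
have d1 : ((fun y => (y + (- u))%R) @^-1` (A `&` J1)) `&` ((fun y => (y + (1 - u))%R) @^-1` (A `&` J2)) = set0.
  apply/seteqP; split => y //=; rewrite /J1 /J2 /= !in_itv /= => -[[_ /andP[h1 h2]] [_ /andP[h3 h4]]]; lra.
have e1 : lam (((fun y => (y + (- u))%R) @^-1` (A `&` J1)) `|` ((fun y => (y + (1 - u))%R) @^-1` (A `&` J2)))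
   = (lam ((fun y => (y + (- u))%R) @^-1` (A `&` J1)) + lam ((fun y => (y + (1 - u))%R) @^-1` (A `&` J2)))%E
   := measureU lam (shift_measurable _ m1) (shift_measurable _ m2) d1.
rewrite e1 !lam_shift //.
have d2 : (A `&` J1) `&` (A `&` J2) = set0.
  apply/seteqP; split => y //=; rewrite /J1 /J2 /= !in_itv /= => -[[_ /andP[h1 h2]] [_ /andP[h3 h4]]]; lra.
have e2 : lam ((A `&` J1) `|` (A `&` J2)) = (lam (A `&` J1) + lam (A `&` J2))%E
   := measureU lam m1 m2 d2.
rewrite -e2; congr lam; apply/seteqP; split => y /=.
- by case=> -[].
- move=> hA; have /I01E [y0 y1] := sA _ hA; rewrite /J1 /J2 /= !in_itv /=.
  have [h|h] := ltP y (1 - u); [left|right]; split => //; apply/andP; lra.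
Qed.

Lemma eqv_rot t A B : msub A -> msub B -> eqv A B -> eqv (rot t A) (rot t B).
Proof. by move=> hA hB; rewrite /eqv -rot_symd lam_rot //; exact: msub_symd. Qed.

Lemma mk_rot t Y : msub Y -> mk (rot t (proj1_sig (mk Y))) = mk (rot t Y).
Proof.
move=> hY; have hV := val_msub (mk Y).
apply: mk_eq; [exact: msub_rot|exact: msub_rot|exact: eqv_rot (val_mk hY)].
Qed.

Definition J (n i : nat) : set Rr := `[i%:R / n%:R, i.+1%:R / n%:R[%classic.

Lemma JE n i y : J n i y <-> i%:R / n%:R <= y /\ y < i%:R / n%:R + 1 / n%:R.
Proof.
rewrite /J /= in_itv /= -natr1 mulrDl mul1r.
by split => [/andP[]|[-> ->]].
Qed.

Lemma exists_n (m : Rr) : 0 < m -> exists n, (0 < n)%N /\ 1 / n%:R < m.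
Proof.
move=> m0; exists (Num.truncn (1 / m)).+1; split => //.
have h := truncnS_gt (1 / m).
rewrite ltr_pdivrMr // in h; rewrite ltr_pdivrMr ?ltr0n // mulrC //.
Qed.

Lemma lam_itv0 A : lam (A `&` `[0, 0[%classic) = 0%E.
Proof.
rewrite (_ : _ `&` _ = set0) ?measure0 //; apply/seteqP; split => y //=.
by rewrite in_itv /= => -[_ /andP[h1 h2]]; lra.
Qed.

Lemma pieces_pos A n : msub A -> (0 < lam A)%E -> (0 < n)%N ->
  exists2 i, (i < n)%N & (0 < lam (A `&` J n i))%E.
Proof.
move=> [mA sA] hpos n0; apply: NNPP => hn.
have z : forall i, (i < n)%N -> lam (A `&` J n i) = 0%E.
  move=> i hi; apply/eqP; rewrite eq_le lam_ge0 andbT leNgt; apply/negP => h.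
  by apply: hn; exists i.
have ind : forall k, (k <= n)%N -> lam (A `&` `[0, k%:R / n%:R[%classic) = 0%E.
  elim=> [|k IH] hk; first by rewrite mul0r lam_itv0.
  apply: (@lam_null_sub _ ((A `&` `[0, k%:R / n%:R[%classic) `|` (A `&` J n k))).
  - by apply: measurableI => //; exact: measurable_itv.
  - by apply: measurableU; apply: measurableI => //; exact: measurable_itv.
  - move=> y [hA]; rewrite /= in_itv /= => /andP[h1 h2].
    have [hy|hy] := ltP y (k%:R / n%:R); [left|right]; split => //.
      by rewrite /= in_itv /= h1 hy.
    by rewrite /J /= in_itv /= hy h2.
  - apply: lam_nullU; try by apply: measurableI => //; exact: measurable_itv.
      by apply: IH; exact: ltnW.
    by apply: z.
have := ind n (leqnn n); rewrite divff ?pnatr_eq0 -?lt0n //.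
rewrite (_ : _ `&` _ = A) => [h|]; first by rewrite h ltxx in hpos.
apply/seteqP; split => y; first by case.
by move=> hA; split => //; exact: sA.
Qed.

Lemma int_between (z : int) : -1 < z%:~R :> Rr -> z%:~R < 0 :> Rr -> False.
Proof.
move=> h1 h2.
have a1 : ((-1 : int) < z)%R by rewrite -(ltr_int Rr) intrN.
have a2 : (z < 0)%R by rewrite -(ltr_int Rr).
lia.
Qed.

Lemma rot_disj t P n i : 1 / n%:R <= frac t -> frac t + 1 / n%:R <= 1 -> P `<=` J n i ->
  rot t P `&` P = set0.
Proof.
move=> h1 h2 sP; apply/seteqP; split => y //=; rewrite rot_frac /rot /=.
move=> [[_ hx] hy]; move: (sP _ hx) (sP _ hy) => /JE [x1 x2] /JE [y1 y2].
move: x1 x2; set u := frac t; rewrite {1 2}/frac => x1 x2; rewrite -/u in h1 h2; clearbody u.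
apply: (@int_between (Num.floor (y - u))); lra.
Qed.

Lemma trans_lemma (B : nat -> set Rr) K x m :
  (B K x /\ ~ B (K + m)%N x) \/ (~ B K x /\ B (K + m)%N x) ->
  exists i, (i < m)%N /\ symd (B (K + i)%N) (B (K + i).+1) x.
Proof.
elim: m => [|m IH]; first by rewrite addn0; tauto.
rewrite addnS => h; have [P|P] := classic (B (K + m)%N x).
- case: h => -[h1 h2].
  + by exists m; split => //; left.
  + have [i [hi hD]] := IH (or_intror (conj h1 P)).
    by exists i; split => //; exact: ltnW.
- case: h => -[h1 h2].
  + have [i [hi hD]] := IH (or_introl (conj h1 P)).
    by exists i; split => //; exact: ltnW.
  + by exists m; split => //; right.
Qed.

Lemma complete_sets (B : nat -> set Rr) : (forall k, msub (B k)) ->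
  (forall k, (lam (symd (B k) (B k.+1)) <= (1 / (2 ^ k.+1)%:R)%:E)%E) ->
  exists L, msub L /\ forall K, (lam (symd (B K) L) <= (1 / (2 ^ K)%:R)%:E)%E.
Proof.
move=> hB hD.
pose L := \bigcup_k (\bigcap_j B (k + j)%N).
have mL : measurable L.
  apply: bigcupT_measurable => k; apply: bigcapT_measurable => j; exact: (hB _).1.
have sL : L `<=` I01.
  by move=> x [k _ /(_ 0%N I)]; rewrite addn0 => /(hB k).2.
exists L; split => // K.
pose F i := symd (B (K + i)%N) (B (K + i).+1).
have mF : forall i, measurable (F i) by move=> i; exact: (msub_symd (hB _) (hB _)).1.
have mS : measurable (symd (B K) L) by exact: (msub_symd (hB _) (conj mL sL)).1.
have sub : symd (B K) L `<=` \bigcup_i F i.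
  move=> x [[hx hL]|[hL hx]].
  - have [m hm] : exists m, ~ B (K + m)%N x.
      apply: NNPP => hn; apply: hL; exists K => // j _.
      by apply: NNPP => hj; apply: hn; exists j.
    by have [i [_ hi]] := trans_lemma (or_introl (conj hx hm)); exists i.
  - case: hL => k _ hk.
    have hm : B (K + k)%N x by rewrite addnC; exact: hk.
    by have [i [_ hi]] := trans_lemma (or_intror (conj hx hm)); exists i.
have h1 : (lam (symd (B K) L) <= \sum_(i <oo) lam (F i))%E :=
  @measure_sigma_subadditive _ _ _ lam (symd (B K) L) F mF mS sub.
apply: le_trans h1 _.
apply: le_trans (epsilon_trick0 xpredT (_ : 0 <= 1 / (2 ^ K)%:R)); last first.
  by rewrite divr_ge0 // ler0n.
apply: lee_nneseries => [i _ _|i _]; first exact: lam_ge0.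
apply: le_trans (hD _) _; rewrite lee_fin -addnS expnD natrM.
rewrite mul1r invfM // mul1r. by [].
Qed.

Definition dd (A B : set Rr) : Rr := fine (lam (symd A B)).

Lemma dd_ge0 A B : 0 <= dd A B.
Proof. exact/fine_ge0/lam_ge0. Qed.

Lemma dd_tri A B C : msub A -> msub B -> msub C -> dd A C <= dd A B + dd B C.
Proof.
move=> hA hB hC.
have f1 := lam_fin (msub_symd hA hB); have f2 := lam_fin (msub_symd hB hC).
have f3 := lam_fin (msub_symd hA hC).
rewrite /dd -fineD //; apply: fine_le => //; first by rewrite fin_numD f1 f2.
have m1 := (msub_symd hA hB).1; have m2 := (msub_symd hB hC).1.
apply: le_trans (measureU2 lam m1 m2).
apply: lam_le; [exact: (msub_symd hA hC).1 | exact: measurableU | exact: symd_trans].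
Qed.

Lemma dd_eqv A B : msub A -> msub B -> eqv A B -> dd A B = 0.
Proof. by move=> _ _; rewrite /dd /eqv => ->. Qed.

Lemma ddC A B : dd A B = dd B A.
Proof. by rewrite /dd symdC. Qed.

Lemma dd_lt_lam A B (r : Rr) : msub A -> msub B -> dd A B < r -> (lam (symd A B) <= r%:E)%E.
Proof.
move=> hA hB h; rewrite -(fineK (lam_fin (msub_symd hA hB))) lee_fin; exact: ltW.
Qed.

Section Model.
Variable alpha : Rr.
Hypothesis irr : forall k : nat, (0 < k)%N -> forall z : int, k%:R * alpha != z%:~R.

Definition qtau (p : QT) := mk (rot alpha (proj1_sig p)).
Definition qtau_inv (p : QT) := mk (rot (- alpha) (proj1_sig p)).

Definition PA : PAops := {| car := QT; bzero := qzero; bone := qone; bcompl := qcompl;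
  bjoin := qjoin; bmeet := qmeet; mu := qmu; tau := qtau; tau_inv := qtau_inv |}.

Lemma qpdistE (p q : PA) : pdist p q = dd (proj1_sig p) (proj1_sig q).
Proof.
have [mp sp] := val_msub p; have [mq sq] := val_msub q.
rewrite /pdist /= /qmu /qjoin /qmeet /qcompl.
rewrite mkI_r ?mkI_l ?mkU_l ?mkU_r; try by msolve.
rewrite lam_val_mk; last by msolve.
rewrite /dd; congr (fine (lam _)); apply/seteqP; split => x; have := sp x; have := sq x; ssolve0 x.
Qed.

Lemma mk_rot0 B : msub B -> mk (rot 0 B) = mk B.
Proof. by move=> [mB sB]; rewrite rot_id. Qed.

Lemma iter_tau k B : msub B -> iter k (tau PA) (mk B) = mk (rot (k%:R * alpha) B).
Proof.
move=> hB; elim: k => [|k IH] /=; first by rewrite mul0r mk_rot0.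
rewrite IH /qtau mk_rot; last exact: msub_rot.
by rewrite rot_rot -natr1 mulrDl mul1r.
Qed.

Lemma lam_J_le n i : (0 < n)%N -> (lam (J n i) <= (1 / n%:R)%:E)%E.
Proof.
move=> n0; rewrite /J lebesgue_measure_itv /= lte_fin.
case: ifP => _; rewrite ?lee_fin -?natr1 ?mulrDl; first lra.
by rewrite divr_ge0 // ler0n.
Qed.

Ltac msolve2 := repeat first [ assumption | apply: val_msub | apply: msub0 | apply: msubI01
  | apply: msub_rot | apply: msubC | apply: msubD | apply: msubU | apply: msubI ].

Lemma msubIl A B : msub A -> measurable B -> msub (A `&` B).
Proof. by move=> [mA sA] mB; split; [exact: measurableI | move=> x [/sA]]. Qed.

Lemma inv_nat_le (a b : nat) : (0 < a)%N -> (a <= b)%N -> 1 / b%:R <= 1 / a%:R :> Rr.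
Proof.
move=> ha hab; rewrite !div1r lef_pV2 ?posrE ?ltr0n ?ler_nat //.
exact: leq_trans ha hab.
Qed.

Lemma piece_ble (a : PA) n i : ble (mk (proj1_sig a `&` J n i) : PA) a.
Proof.
have ha := val_msub a.
have hP : msub (proj1_sig a `&` J n i) by apply: msubIl => //; exact: measurable_itv.
rewrite /ble /= /qmeet mkI_l //.
congr mk; apply/seteqP; split => x /=; rewrite /setI /=; tauto.
Qed.

Lemma PA_atomless (a : PA) : a <> bzero PA ->
  exists b : PA, ble b a /\ 0 < mu PA b /\ mu PA b < mu PA a.
Proof.
move=> ha; have hA := val_msub a.
have m0 : 0 < qmu a.
  have := q_mu_ge0 a; rewrite le_eqVlt => /orP [/eqP h|//]; exfalso; apply: ha.
  exact: q_mu_pos (esym h).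
have hl : (0 < lam (proj1_sig a))%E by rewrite -(fineK (lam_fin hA)) lte_fin.
have [n [n0 hn]] := exists_n m0.
have [i hi hP] := pieces_pos hA hl n0.
have hPs : msub (proj1_sig a `&` J n i) by apply: msubIl => //; exact: measurable_itv.
exists (mk (proj1_sig a `&` J n i)); split; first exact: piece_ble.
rewrite /= /qmu lam_val_mk //; split.
  by rewrite -lte_fin fineK //; exact: lam_fin.
apply: le_lt_trans hn; rewrite -lee_fin fineK; last exact: lam_fin.
apply: le_trans (lam_J_le i n0).
apply: lam_le; [exact: hPs.1 | exact: measurable_itv | by move=> x []].
Qed.

Lemma PA_aperiodic (a : PA) : a <> bzero PA -> forall k : nat, (0 < k)%N ->
  exists b : PA, ble b a /\ iter k (tau PA) b <> b.
Proof.
move=> ha k k0; have hA := val_msub a.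
have m0 : 0 < qmu a.
  have := q_mu_ge0 a; rewrite le_eqVlt => /orP [/eqP h|//]; exfalso; apply: ha.
  exact: q_mu_pos (esym h).
have hl : (0 < lam (proj1_sig a))%E by rewrite -(fineK (lam_fin hA)) lte_fin.
set t := k%:R * alpha.
have /andP [u0 u1] := frac_itv t.
have un0 : frac t != 0.
  apply/negP => /eqP h; move: (irr k0 (Num.floor t)); rewrite -/t.
  by rewrite /frac in h; rewrite {1}(subr0_eq h) eqxx.
have upos : 0 < frac t by rewrite lt_neqAle eq_sym un0.
have mpos : 0 < Num.min (frac t) (1 - frac t) by rewrite lt_min upos subr_gt0.
have [n [n0 hn]] := exists_n mpos.
rewrite lt_min in hn; move/andP: hn => [hn1 hn2].
have [i hi hP] := pieces_pos hA hl n0.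
set P := proj1_sig a `&` J n i in hP *.
have hPs : msub P by apply: msubIl => //; exact: measurable_itv.
exists (mk P); split; first exact: piece_ble.
rewrite iter_tau // => h.
have he := mk_inj (msub_rot t hPs) hPs h.
have hd := @rot_disj t P n i (ltW hn1) (ltac:(lra)) (fun x hx => hx.2).
have : lam P = 0%E.
  apply: (lam_null_sub _ _ _ he); [exact: hPs.1 | exact: (msub_symd (msub_rot t hPs) hPs).1 |].
  move=> x hx; right; split => // hr.
  by have : (rot t P `&` P) x by []; rewrite hd.
by move=> h0; rewrite h0 ltxx in hP.
Qed.

Lemma PA_complete (u : nat -> PA) :
    (forall e : Rr, 0 < e -> exists N, forall m n, (N <= m)%N -> (N <= n)%N ->
        pdist (u m) (u n) < e) ->
    exists a : PA, forall e : Rr, 0 < e -> exists N, forall n, (N <= n)%N ->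
        pdist (u n) a < e.
Proof.
move=> hC.
have hex : forall k, exists Nk, forall m n, (Nk <= m)%N -> (Nk <= n)%N ->
    pdist (u m) (u n) < 1 / (2 ^ k.+1)%:R.
  by move=> k; apply: hC; rewrite divr_gt0 // ltr0n expn_gt0.
have [N hN] := boolp.choice hex.
pose nk := fix nk k := if k is k'.+1 then maxn (nk k') (N k) else N 0.
have hNk : forall k, (N k <= nk k)%N by case => //= k; exact: leq_maxr.
have hmono : forall k, (nk k <= nk k.+1)%N by move=> k; exact: leq_maxl.
pose B k := proj1_sig (u (nk k)).
have hB : forall k, msub (B k) by move=> k; exact: val_msub.
have hD : forall k, (lam (symd (B k) (B k.+1)) <= (1 / (2 ^ k.+1)%:R)%:E)%E.
  move=> k; apply: dd_lt_lam; try exact: hB.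
  rewrite -qpdistE; apply: hN; [exact: hNk | exact: leq_trans (hNk k) (hmono k)].
have [L [hL hLK]] := complete_sets hB hD.
exists (mk L) => e e0.
have [K [K0 hK]] := exists_n (ltac:(lra) : 0 < e / 2).
exists (nk K) => n hn.
have h2K : 1 / (2 ^ K)%:R <= 1 / K%:R :> Rr.
  by apply: inv_nat_le => //; exact/ltnW/ltn_expl.
have h2K1 : 1 / (2 ^ K.+1)%:R <= 1 / (2 ^ K)%:R :> Rr.
  by apply: inv_nat_le; rewrite ?expn_gt0 // expnS leq_pmull.
rewrite qpdistE.
have hV := val_mk hL; set V := proj1_sig (mk L) in hV *.
have hVs : msub V by exact: val_msub.
have hun := val_msub (u n).
have t1 := dd_tri hun (hB K) hVs.
have t2 := dd_tri (hB K) hL hVs.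
have e1 : dd L V = 0 by apply: dd_eqv => //; exact: eqv_sym.
have e2 : dd (proj1_sig (u n)) (B K) < 1 / (2 ^ K.+1)%:R.
  by rewrite /B -qpdistE; apply: hN; [exact: leq_trans (hNk K) hn | exact: hNk].
have e3 : dd (B K) L <= 1 / (2 ^ K)%:R.
  by rewrite /dd -lee_fin fineK ?hLK //; exact: lam_fin (msub_symd (hB K) hL).
lra.
Qed.

Lemma PA_axioms : is_APrA_model PA.
Proof.
split.
- exact: q_joinC.
- exact: q_meetC.
- exact: q_joinA.
- exact: q_meetA.
- exact: q_joinKmeet.
- exact: q_meetKjoin.
- exact: q_join_meetD.
- exact: q_meet_joinD.
- exact: q_join_compl.
- exact: q_meet_compl.
- exact: q_mu_one.
- exact: q_mu_ge0.
- exact: q_mu_add.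
- exact: q_mu_pos.
- exact: PA_complete.
- exact: PA_atomless.
- move=> a /=; rewrite /qtau /qtau_inv mk_rot ?rot_rot; last by msolve2.
  by rewrite addrN mk_rot0 ?mk_val //; msolve2.
- move=> a /=; rewrite /qtau /qtau_inv mk_rot ?rot_rot; last by msolve2.
  by rewrite addNr mk_rot0 ?mk_val //; msolve2.
- by rewrite /= /qtau /qzero mk_rot ?rot0 //; msolve2.
- by rewrite /= /qtau /qone mk_rot ?rotI01 //; msolve2.
- move=> a /=; rewrite /qtau /qcompl mk_rot ?mkC ?rotC //; try by msolve2.
- move=> a b /=; rewrite /qtau /qjoin mk_rot ?mkU_l ?mkU_r ?rotU //; try by msolve2.
- move=> a b /=; rewrite /qtau /qmeet mk_rot ?mkI_l ?mkI_r ?rotI //; try by msolve2.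
- move=> a /=; rewrite /qmu /qtau lam_val_mk ?lam_rot //; try by msolve2.
- exact: PA_aperiodic.
Qed.

End Model.

Lemma dd_mk X Y : msub X -> msub Y -> dd (proj1_sig (mk X)) (proj1_sig (mk Y)) = dd X Y.
Proof.
move=> hX hY; have hX' := val_msub (mk X); have hY' := val_msub (mk Y).
have e1 : dd (proj1_sig (mk X)) X = 0 by apply: dd_eqv => //; exact: val_mk.
have e2 : dd Y (proj1_sig (mk Y)) = 0 by apply: dd_eqv => //; apply: eqv_sym; exact: val_mk.
have e3 : dd X (proj1_sig (mk X)) = 0 by rewrite ddC.
have e4 : dd (proj1_sig (mk Y)) Y = 0 by rewrite ddC.
have t1 := dd_tri hX' hX hY'; have t2 := dd_tri hX hY hY'.
have t3 := dd_tri hX hX' hY; have t4 := dd_tri hX' hY' hY.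
apply/eqP; rewrite eq_le; apply/andP; split; lra.
Qed.

Lemma dd_rot w X Y : msub X -> msub Y -> dd (rot w X) (rot w Y) = dd X Y.
Proof. by move=> hX hY; rewrite /dd -rot_symd lam_rot //; exact: msub_symd. Qed.

Definition Ahalf : set Rr := `[0, 2^-1[%classic.

Lemma msub_Ahalf : msub Ahalf.
Proof.
split; first exact: measurable_itv.
by move=> x; rewrite /Ahalf /= in_itv /= => /andP[h1 h2]; apply/I01E; lra.
Qed.

Lemma rot_half : rot (2^-1) Ahalf = I01 `\` Ahalf.
Proof.
apply/seteqP; split => y /=; rewrite /rot /Ahalf /= in_itv /=.
- move=> [/I01E [y0 y1]]; have [h|h] := leP (2^-1) y.
  + by rewrite frac_id; [move=> _; split; [apply/I01E|]; rewrite ?in_itv /=; lra | apply/andP; lra].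
  + rewrite -(fracDz _ 1) frac_id; last by apply/andP; lra.
    by move=> /andP[]; lra.
- move=> [/I01E [y0 y1]]; rewrite in_itv /= => h; split; first by apply/I01E.
  rewrite frac_id; first by apply/andP; move/negP: h; rewrite negb_and -!ltNge; lra.
  by apply/andP; move/negP: h; rewrite negb_and -!ltNge; lra.
Qed.

Lemma dd_Ahalf_rot v : 0 <= v <= 2^-1 -> dd Ahalf (rot v Ahalf) <= 2 * v.
Proof.
move=> /andP[v0 v1].
have hR := msub_rot v msub_Ahalf.
rewrite /dd -lee_fin fineK; last exact: lam_fin (msub_symd msub_Ahalf hR).
have sub : symd Ahalf (rot v Ahalf) `<=` `[0, v[%classic `|` `[2^-1, 2^-1 + v[%classic.
  move=> y; rewrite /symd /rot /Ahalf /= !in_itv /=.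
  case=> -[h1 h2].
  - left; move/andP: h1 => [y0 y1]; apply/andP; split => //; rewrite ltNge; apply/negP => hv.
    apply: h2; split; first by apply/I01E; lra.
    by rewrite frac_id; apply/andP; lra.
  - right; move: h1 => [/I01E [y0 y1]]; move/negP: h2; rewrite negb_and -!ltNge => h2.
    have hy : 2^-1 <= y by case/orP: h2 => h; lra.
    by rewrite frac_id; [move=> /andP [_ h3]; apply/andP; lra | apply/andP; lra].
apply: le_trans (lam_le _ _ sub) _.
- exact: (msub_symd msub_Ahalf hR).1.
- by apply: measurableU; exact: measurable_itv.
pose S1 : set Rr := `[0, v[%classic; pose S2 : set Rr := `[2^-1, 2^-1 + v[%classic.
have hU : (lam (S1 `|` S2) <= lam S1 + lam S2)%E := measureU2 lam (measurable_itv _) (measurable_itv _).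
apply: le_trans hU _.
rewrite /S1 /S2 !lebesgue_measure_itv /= !lte_fin.
case: ifP => _; case: ifP => _; rewrite ?adde0 ?add0e -?EFinD ?lee_fin; lra.
Qed.

Fixpoint hr (s : seq bool) : Rr :=
  if s is b :: s' then (8 * (b : nat)%:R + hr s') / 16 else 0.

Lemma hr_bounds s : 0 <= hr s <= 9 / 16.
Proof.
elim: s => [|b s /andP[h1 h2]] /=; first by rewrite lexx /=; lra.
have [b0 b1] : (0 <= (b : nat)%:R :> Rr) /\ ((b : nat)%:R <= 1 :> Rr).
  by case: b => /=; split; lra.
by apply/andP; lra.
Qed.

Lemma hr_rat s : exists q : rat, hr s = ratr q.
Proof.
elim: s => [|b s [q hq]] /=; first by exists 0; rewrite rmorph0.
exists ((8 * (b : nat)%:R + q) / 16); rewrite fmorph_div rmorphD rmorphM /= !ratr_nat hq.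
by [].
Qed.

Lemma hr_shift k s : exists z : int, (16 ^ k)%:R * hr s = z%:~R + hr (drop k s).
Proof.
elim: k s => [|k IH] s; first by exists 0; rewrite drop0 expn0 mul1r add0r.
case: s => [|b s] /=; first by exists 0; rewrite mulr0 add0r.
have [z hz] := IH s; exists (z + (16 ^ k * 8 * (b : nat))%N%:Z).
have hz' : hr (drop k s) = (16 ^ k)%:R * hr s - z%:~R by rewrite hz; ring.
rewrite hz' intrD -!pmulrn !natrM !natrX exprS.
by field.
Qed.

Definition alpha_s (s : seq bool) : Rr := hr s + pi / (1000 * (16 ^ size s)%:R).

Lemma alpha_irr s k : (0 < k)%N -> forall z : int, k%:R * alpha_s s != z%:~R.
Proof.
move=> k0 z; apply/negP => /eqP h.
have [q hq] := hr_rat s.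
apply: (@pi_irrationnal Rr).
have [Dq hDq] : exists Dq : rat, ratr Dq = 1000 * (16 ^ size s)%:R :> Rr.
  by exists (1000%:R * (16 ^ size s)%:R); rewrite rmorphM /= !ratr_nat.
rewrite /alpha_s -hDq in h *.
have D0 : ratr Dq != 0 :> Rr.
  by rewrite hDq mulf_eq0 negb_or !pnatr_eq0 expn_eq0.
move eD: (ratr Dq) D0 h => D D0 h.
have k0' : k%:R != 0 :> Rr by rewrite pnatr_eq0 -lt0n.
have e : hr s + pi / D = z%:~R / k%:R.
  by rewrite -h; field; rewrite k0' D0.
have hpi : pi = (z%:~R / k%:R - hr s) * D.
  by rewrite -e; field; rewrite ?k0' ?D0.
exists ((z%:~R / k%:R - q) * Dq) => //.
by rewrite hpi hq -eD rmorphM rmorphB fmorph_div /= ratr_int ratr_nat.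
Qed.

Lemma dd_compl_half : dd Ahalf (I01 `\` Ahalf) = 1.
Proof.
have [_ sA] := msub_Ahalf.
rewrite /dd (_ : symd _ _ = I01) ?lam_I01 //.
apply/seteqP; split => x; have := sA x; ssolve0 x.
Qed.

Lemma v_bounds s k : (k < size s)%N ->
  let v := hr (drop k.+1 s) / 16 + (16 ^ k)%:R * pi / (1000 * (16 ^ size s)%:R) in
  0 <= v /\ v <= 16^-1.
Proof.
move=> hk v.
have /andP [h0 h1] := hr_bounds (drop k.+1 s).
have hle : (16 ^ k <= 16 ^ size s)%N by apply: leq_pexp2l => //; exact: ltnW.
set a := (16 ^ k)%:R : Rr; set b := (16 ^ size s)%:R : Rr.
have a0 : 0 < a by rewrite /a ltr0n expn_gt0.
have ab : a <= b by rewrite /a /b ler_nat.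
have b0 : 0 < b by apply: lt_le_trans ab.
set w := a / b.
have w0 : 0 <= w by rewrite /w divr_ge0 // ltW.
have w1 : w <= 1 by rewrite /w ler_pdivrMr // mul1r.
have ew : a * pi / (1000 * b) = w * pi / 1000.
  by rewrite /w; field; rewrite gt_eqF.
have hp0 := pi_ge0 Rr; have hp4 := pihalf_lt2 Rr.
have wp : 0 <= (1 - w) * pi by apply: mulr_ge0 => //; rewrite subr_ge0.
rewrite mulrBl mul1r in wp.
have wp0 := mulr_ge0 w0 hp0.
rewrite /v ew; split; lra.
Qed.

Lemma realizer_exists (s : seq bool) : exists (M : APrA_model) (a : M),
  forall k, (k < size s)%N ->
    if nth false s k then 7/8 <= pdist a (iter (16 ^ k) (tau M) a)
    else pdist a (iter (16 ^ k) (tau M) a) <= 8^-1.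
Proof.
pose M := {| mops := PA (alpha_s s); maxioms := PA_axioms (@alpha_irr s) |}.
exists M, (mk Ahalf : PA (alpha_s s)) => k hk.
have hA := msub_Ahalf.
have -> : iter (16 ^ k) (tau M) (mk Ahalf : PA (alpha_s s)) =
          mk (rot ((16 ^ k)%:R * alpha_s s) Ahalf) by exact: iter_tau.
rewrite (qpdistE (mk Ahalf : PA (alpha_s s))) dd_mk //; last exact: msub_rot.
have [z hz] := hr_shift k s.
have hd : drop k s = nth false s k :: drop k.+1 s by exact: drop_nth.
have [v0 v1] := v_bounds hk.
set v := hr (drop k.+1 s) / 16 + (16 ^ k)%:R * pi / (1000 * (16 ^ size s)%:R) in v0 v1.
have ht : (16 ^ k)%:R * alpha_s s = v + (nth false s k : nat)%:R / 2 + z%:~R.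
  rewrite /alpha_s mulrDr hz hd /v /=; field; by rewrite pnatr_eq0 expn_eq0.
rewrite ht rot_int.
case: (nth false s k) => /=.
- rewrite (_ : 1%:R / 2 = 2^-1); last by rewrite div1r.
  rewrite addrC -rot_rot rot_half.
  have hC : msub (I01 `\` Ahalf) by exact: msubC.
  have hR : msub (rot v (I01 `\` Ahalf)) by exact: msub_rot.
  have t1 := dd_tri hA hR hC.
  have e1 : dd (rot v (I01 `\` Ahalf)) (I01 `\` Ahalf) = dd Ahalf (rot v Ahalf).
    rewrite ddC -rot_half rot_rot addrC -rot_rot dd_rot //; exact: msub_rot.
  have b1 := dd_Ahalf_rot (ltac:(apply/andP; lra) : 0 <= v <= 2^-1).
  rewrite dd_compl_half e1 in t1; lra.
- rewrite (_ : v + 0%:R / 2 = v); last by rewrite mul0r addr0.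
  have b1 := dd_Ahalf_rot (ltac:(apply/andP; lra) : 0 <= v <= 2^-1).
  lra.
Qed.

Local Close Scope classical_set_scope.

Theorem proposition3p4 :
  exists pi : seq bool -> ptype,
    (forall s : seq bool, one_var_ptype (pi s) /\ consistent (pi s)) /\
    (forall s : seq bool,
        ptype_dist_ge (pi (rcons s false)) (pi (rcons s true)) (3%:R^-1 : Rr)) /\
    (forall s t : seq bool, prefix s t -> entails (pi t) (pi s)).
Proof.
exists pis; split; [|split].
- move=> s; split.
    move=> _ [k _ ->]; rewrite /cond; case: (nth _ _ _) => /=; try split; try split; try exact: tfv_tpow; try done.
  have [M [a ha]] := realizer_exists s.
  by exists M, a => _ [k hk ->]; apply/feval_cond; apply: ha.
- move=> s M a0 a1 h0 h1.
  have /feval_cond e0 : feval (fun _ => a0) (cond (size s) false) = 0.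
    by apply: h0; exists (size s); rewrite ?size_rcons // nth_rcons ltnn eqxx.
  have /feval_cond e1 : feval (fun _ => a1) (cond (size s) true) = 0.
    by apply: h1; exists (size s); rewrite ?size_rcons // nth_rcons ltnn eqxx.
  exact: (@sep_bound M (maxioms M) _ _ _ e0 e1).
- move=> s t /prefixP [u ->] M a h _ [k hk ->].
  apply: h; exists k; first by rewrite size_cat ltn_addr.
  by rewrite nth_cat hk.
Qed.
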